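(* Let $b\ge 2$. For every positive integer $N$ there exist infinitely many positive integers $M$ such that $N\cdot M$ is a $b$-wARH number. In particular every positive integer divides some $b$-wARH number.
   Context: Fix a base $b\ge 2$. $s_b(N)$ is the sum of the base-$b$ digits of $N$. For a positive integer $X$, its reversal $X^R$ is the integer whose base-$b$ representation is that of $X$ written in reverse order (leading zeros of the result are dropped). A positive integer $N$ is a $b$-wARH number if there exists an integer $A\ge 0$ such that $N=(A+s_b(N))+(A+s_b(N))^R$. *)

(* Defs.v *)
From mathcomp Require Import all_boot.
Set Implicit Arguments. Unset Strict Implicit. Unset Printing Implicit Defensive.

(* base-b digits of n, least significant first; fuel k (k = n suffices for b >= 2) *)
Fixpoint digits_fuel (b k n : nat) : seq nat :=
  match k with
  | 0 => [::]
  | k'.+1 => if n == 0 then [::] else (n %% b) :: digits_fuel b k' (n %/ b)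
  end.

Definition digits (b n : nat) : seq nat := digits_fuel b n n.

Definition from_digits (b : nat) (s : seq nat) : nat :=
  foldr (fun d acc => d + b * acc) 0 s.

Definition digsum (b n : nat) : nat := sumn (digits b n).

(* X^R: reverse the base-b representation (leading zeros of the result vanish) *)
Definition rev_num (b n : nat) : nat := from_digits b (rev (digits b n)).

Definition wARH (b N : nat) : Prop :=
  0 < N /\ exists A : nat, N = (A + digsum b N) + rev_num b (A + digsum b N).

(* Main.v *)
Require Import Defs.
From mathcomp Require Import all_boot.
From mathcomp Require cyclic.
From mathcomp Require Import zify.

Section Aux.
Variable b : nat.
Hypothesis hb : 2 <= b.

Lemma fuel_indep k1 k2 n : n <= k1 -> n <= k2 ->
  digits_fuel b k1 n = digits_fuel b k2 n.
Proof.
elim: k1 k2 n => [|k1 IH] [|k2] n h1 h2 //=.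
- by have -> : n = 0 by lia.
- by have -> : n = 0 by lia.
- case: eqP => // /eqP hn.
  have hlt : n %/ b < n by apply: ltn_Pdiv; lia.
  by congr cons; apply: IH; lia.
Qed.

Lemma digitsE n : 0 < n -> digits b n = n %% b :: digits b (n %/ b).
Proof.
move=> hn; rewrite /digits.
case: n hn => [//|n] _ /=.
congr cons; apply: fuel_indep => //.
have : n.+1 %/ b < n.+1 by apply: ltn_Pdiv; lia.
lia.
Qed.

Lemma digits0 : digits b 0 = [::].
Proof. by []. Qed.

Lemma fd_cat s t : from_digits b (s ++ t) = from_digits b s + b ^ size s * from_digits b t.
Proof.
elim: s => [|d s IH] /=; first by rewrite expn0 mul1n.
rewrite IH expnS; lia.
Qed.

Lemma digits_fd s : all (fun d => d < b) s -> last 1 s != 0 -> digits b (from_digits b s) = s.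
Proof.
elim: s => [|d s IH] //= /andP [hd hs] hl.
have hl' : last 1 s != 0 by case: s hl {IH hs}.
have IH' := IH hs hl'.
have hpos : 0 < d + b * from_digits b s.
  case: s hl IH' {IH hs hl'} => [|e s] hl IH'.
    by rewrite /= muln0 addn0 lt0n.
  have : from_digits b (e :: s) != 0.
    by apply/negP => /eqP H; move: IH'; rewrite H.
  rewrite -/(from_digits b (e :: s)); lia.
rewrite digitsE //.
have -> : (d + b * from_digits b s) %% b = d.
  by rewrite mulnC addnC modnMDl modn_small.
have -> : (d + b * from_digits b s) %/ b = from_digits b s.
  by rewrite mulnC addnC divnMDl ?divn_small ?addn0 //; lia.
by rewrite IH'.
Qed.

Lemma digsum_mulb m : digsum b (b * m) = digsum b m.
Proof.
case: (posnP m) => [->|hm]; first by rewrite muln0.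
rewrite /digsum digitsE; last by lia.
rewrite mulnC modnMl mulnK; last by lia.
by rewrite /= add0n.
Qed.

Lemma digsum_mulbX j m : digsum b (b ^ j * m) = digsum b m.
Proof.
elim: j => [|j IH]; first by rewrite expn0 mul1n.
by rewrite expnS -mulnA digsum_mulb.
Qed.

Lemma digsum_le n : digsum b n <= n.
Proof.
elim: n {-2}n (leqnn n) => [|n IH] m hm.
  by move: hm; rewrite leqn0 => /eqP ->.
case: (posnP m) => [->|hm0]; first by [].
rewrite /digsum digitsE //= -/(digsum b (m %/ b)).
have h1 : m %/ b < m by apply: ltn_Pdiv; lia.
have h2 := IH (m %/ b) ltac:(lia).
have h3 : m = m %% b + b * (m %/ b).
  by rewrite mulnC addnC -divn_eq.
nia.
Qed.

Fixpoint Gf (Y r : nat) : nat := if r is r'.+1 then 1 + Y * Gf Y r' else 0.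

Lemma GfE Z r : Z * Gf Z.+1 r + 1 = Z.+1 ^ r.
Proof.
elim: r => [|r IH] /=; first by rewrite muln0.
rewrite expnS -IH; nia.
Qed.

Lemma fd_flat D r : from_digits b (flatten (nseq r D)) = from_digits b D * Gf (b ^ size D) r.
Proof.
elim: r => [|r IH] /=; first by rewrite muln0.
rewrite fd_cat IH; nia.
Qed.

Lemma flat_comm (D : seq nat) r : flatten (nseq r D) ++ D = D ++ flatten (nseq r D).
Proof.
elim: r => [|r IH] /=; first by rewrite cats0.
by rewrite -catA IH.
Qed.

Lemma rev_flat (D : seq nat) r : rev (flatten (nseq r D)) = flatten (nseq r (rev D)).
Proof.
elim: r => [|r IH] //=.
by rewrite rev_cat IH flat_comm.
Qed.

Lemma last_flat (D : seq nat) r x : D != [::] -> last x (flatten (nseq r.+1 D)) = last x D.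
Proof.
move=> hD; elim: r x => [|r IH] x /=; first by rewrite cats0.
rewrite last_cat IH.
by clear IH; case: D hD.
Qed.

Lemma all_flat (P : pred nat) (D : seq nat) r : all P D -> all P (flatten (nseq r D)).
Proof.
move=> hD; elim: r => [|r IH] //=.
by rewrite all_cat hD IH.
Qed.

Lemma fd_nseq0 n : from_digits b (nseq n 0) = 0.
Proof. by elim: n => [|n IH] //=; rewrite IH muln0. Qed.

Lemma fd_nseqb n : (from_digits b (nseq n b.-1)).+1 = b ^ n.
Proof.
elim: n => [|n IH] //=.
rewrite expnS -IH; lia.
Qed.

End Aux.

Theorem corollary6 (b : nat) (hb : 2 <= b) (N : nat) (hN : 0 < N) :
  forall K : nat, exists M : nat, K < M /\ wARH b (N * M).
Proof.
move=> K.
set pi := \pi(b).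
set N1 := N`_pi.
set N2 := N`_pi^'.
have hN12 : N1 * N2 = N by rewrite partnC.
set k := N * K + N.
set D := 1 :: (nseq k 0 ++ nseq k.+1 b.-1).
have hsz : size D = (k + k.+1).+1.
  by rewrite /D /= size_cat /= !size_nseq; lia.
set Y := b ^ size D.
have hY : 1 < Y by rewrite /Y -{1}(expn0 b) ltn_exp2l.
set m := N2 * Y.-1.
have hN2 : 0 < N2 by rewrite part_gt0.
have hm : 0 < m by rewrite muln_gt0 hN2 /=; lia.
set r := totient m.
have hr : 0 < r by rewrite totient_gt0.
set G := Gf Y r.
have hG : 0 < G by rewrite /G; case: (r) hr => //= r' _; lia.
have hN2G : N2 %| G.
  have hcop : coprime Y m.
    rewrite coprimeMr; apply/andP; split.
      apply: coprimeXl.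
      have := coprime_partC pi b N.
      by rewrite part_pnat_id // pnat_pi //; lia.
    by apply: coprimenP; lia.
  have := cyclic.Euler_exp_totient hcop.
  move/eqP; rewrite eqn_mod_dvd; last by rewrite expn_gt0; lia.
  have hY' : Y = Y.-1.+1 by lia.
  have := @GfE b hb Y.-1 r; rewrite -hY' -/G => hE.
  have -> : Y ^ totient m - 1 = G * Y.-1 by rewrite -/r -hE; lia.
  by rewrite /m dvdn_pmul2r //; lia.
have hN1 : N1 %| b ^ N.
  apply/dvdn_partP; first by rewrite part_gt0.
  move=> p hp.
  have hpb : p \in pi by apply: (pnatPpi (part_pnat pi N)).
  have hpd : p %| b.
    by move: hpb; rewrite /pi /= mem_primes => /and3P [].
  apply: (dvdn_trans (partn_dvd p hN (dvdn_part pi N))).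
  rewrite p_part.
  apply: (@dvdn_trans (b ^ logn p N)); first exact: dvdn_exp2r.
  apply: dvdn_exp2l.
  by apply: ltnW; apply: ltn_logl.
set s := flatten (nseq r D).
set X := from_digits b s.
have hDne : D != [::] by [].
have hall : all (fun d => d < b) s.
  apply: all_flat; rewrite /D /= all_cat all_nseq /= all_nseq.
  have h1 : b.-1 < b by lia.
  have h0 : 0 < b by lia.
  by rewrite hb h0 h1 !orbT.
have hlast : last 1 s != 0.
  rewrite /s; case: (r) hr => // r' _.
  rewrite last_flat // /D /= last_cat /=.
  have hl : forall (n x : nat), last x (nseq n x) = x by move=> n x; elim: n.
  rewrite hl.
  lia.
have hdig : digits b X = s.
  exact: (@digits_fd b hb _ hall hlast).
set F := from_digits b (nseq k.+1 b.-1).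
have hF : F.+1 = b ^ k.+1 by exact: (@fd_nseqb b hb).
have hfdD : from_digits b D = 1 + b * (b ^ k * F).
  by rewrite /D /= (@fd_cat b hb) fd_nseq0 size_nseq.
have hfdrD : from_digits b (rev D) = F + b ^ k.+1 * (b ^ k * 1).
  rewrite /D rev_cons rev_cat !rev_nseq -cats1 !(@fd_cat b hb).
  rewrite -/F fd_nseq0 size_cat !size_nseq.
  have -> : from_digits b [:: 1] = 1 by rewrite /= muln0.
  rewrite expnD; nia.
have hsum : from_digits b D + from_digits b (rev D) = b ^ (k + k.+1) * (b + 1).
  have hbk : b * b ^ k = F.+1 by rewrite hF expnS.
  rewrite hfdD hfdrD expnD -hF; nia.
set T := X + rev_num b X.
have hT : T = b ^ (k + k.+1) * ((b + 1) * G).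
  rewrite /T /rev_num hdig /X /s rev_flat !(@fd_flat b hb) size_rev -/Y -/G.
  by rewrite -mulnDl hsum mulnA.
have hNT : N %| T.
  rewrite hT -hN12.
  apply: dvdn_mul; last exact: dvdn_mull.
  apply: (dvdn_trans hN1); apply: dvdn_exp2l; lia.
exists (T %/ N).
have hTN : N * (T %/ N) = T by rewrite mulnC divnK.
split.
  rewrite -(ltn_pmul2l hN) hTN hT.
  have h1 : N * K < b ^ (N * K) by apply: ltn_expl.
  have h2 : b ^ (N * K) <= b ^ (k + k.+1) by apply: leq_pexp2l; lia.
  have h3 : 0 < (b + 1) * G by rewrite muln_gt0 hG; lia.
  nia.
rewrite hTN; split.
  rewrite hT; rewrite !muln_gt0 hG expn_gt0; lia.
exists (X - digsum b T).
have hds : digsum b T <= X.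
  rewrite hT (@digsum_mulbX b hb).
  apply: (leq_trans (@digsum_le b hb _)).
  rewrite /X /s (@fd_flat b hb) -/Y -/G hfdD.
  apply: leq_mul => //.
  have : b <= b * (b ^ k * F).
    rewrite -[X in X <= _]muln1 leq_mul2l; apply/orP; right.
    rewrite muln_gt0 expn_gt0 /=.
    have : 1 < b ^ k.+1 by rewrite -{1}(expn0 b) ltn_exp2l.
    lia.
  lia.
rewrite subnK //.
Qed.
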